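(* Over a field of characteristic $0$, write $[a,b]=ab-ba$ and $\{a,b\}=ab+ba$ (so $ab=\tfrac12([a,b]+\{a,b\})$). An algebra is left-symmetric if and only if, in terms of the anticommutative operation $[\cdot,\cdot]$ and the commutative operation $\{\cdot,\cdot\}$, it satisfies \[ [[a,b],c]+[[b,c],a]+[[c,a],b]=0 \] and \[ \{\{a,b\},c\}=-\{[a,b],c\}-2\{[a,c],b\}+[\{a,b\},c]-[[a,c],b]+\{a,\{b,c\}\}-\{a,[b,c]\}+[a,\{b,c\}]. \]
   Context: A left-symmetric algebra is an algebra whose associator $(a,b,c)=(ab)c-a(bc)$ satisfies $(a,b,c)=(b,a,c)$. The statement is the polarization (in the sense of Markl–Remm) of the left-symmetric operad: the defining identities rewritten in the two operations $[\cdot,\cdot]$, $\{\cdot,\cdot\}$. *)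

(* Defs.v *)
From HB Require Import structures.
From mathcomp Require Import all_boot all_algebra.
Set Implicit Arguments. Unset Strict Implicit. Unset Printing Implicit Defensive.
Import GRing.Theory.
Local Open Scope ring_scope.

Definition bilinear_mul (K : fieldType) (V : lmodType K) (mul : V -> V -> V) : Prop :=
  [/\ forall a b c, mul (a + b) c = mul a c + mul b c,
      forall a b c, mul a (b + c) = mul a b + mul a c,
      forall (k : K) a b, mul (k *: a) b = k *: mul a b
    & forall (k : K) a b, mul a (k *: b) = k *: mul a b].

Definition associator (K : fieldType) (V : lmodType K) (mul : V -> V -> V) (a b c : V) : V :=
  mul (mul a b) c - mul a (mul b c).

Definition left_symmetric (K : fieldType) (V : lmodType K) (mul : V -> V -> V) : Prop :=
  forall a b c, associator mul a b c = associator mul b a c.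

Definition brk (K : fieldType) (V : lmodType K) (mul : V -> V -> V) (a b : V) : V :=
  mul a b - mul b a.

Definition crl (K : fieldType) (V : lmodType K) (mul : V -> V -> V) (a b : V) : V :=
  mul a b + mul b a.

(* Main.v *)
Require Import Defs.
From HB Require Import structures.
From mathcomp Require Import all_boot all_algebra.
Import GRing.Theory.
Local Open Scope ring_scope.

Section Refl.
Variable V : zmodType.

Inductive ex := At of nat | Ad of ex & ex | Op of ex | Ze | Mn of ex & nat.

Fixpoint evx (s : seq V) (e : ex) : V :=
  match e with
  | At n => nth 0 s n
  | Ad e1 e2 => evx s e1 + evx s e2
  | Op e1 => - evx s e1
  | Ze => 0
  | Mn e1 n => evx s e1 *+ n
  end.

Fixpoint addl (c d : seq int) : seq int :=
  match c, d with
  | [::], _ => d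
  | _, [::] => c
  | x :: c', y :: d' => (x + y) :: addl c' d'
  end.

Fixpoint norm (e : ex) : seq int :=
  match e with
  | At n => rcons (nseq n 0) 1
  | Ad e1 e2 => addl (norm e1) (norm e2)
  | Op e1 => map (fun z => - z) (norm e1)
  | Ze => [::]
  | Mn e1 n => map (fun z => z * n%:Z) (norm e1)
  end.

Fixpoint lc (c : seq int) (s : seq V) : V :=
  match c with
  | [::] => 0
  | x :: c' => head 0 s *~ x + lc c' (behead s)
  end.

Lemma lc_addl c d s : lc (addl c d) s = lc c s + lc d s.
Proof.
elim: c d s => [|x c IH] [|y d] s /=; rewrite ?add0r ?addr0 //.
by rewrite IH mulrzDr addrACA.
Qed.

Lemma lc_opp c s : lc (map (fun z => - z) c) s = - lc c s.
Proof. by elim: c s => [|x c IH] s /=; rewrite ?oppr0 // IH mulrNz opprD. Qed.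

Lemma lc_muln c n s : lc (map (fun z => z * n%:Z) c) s = lc c s *+ n.
Proof.
elim: c s => [|x c IH] s /=; rewrite ?mul0rn // IH mulrnDl.
by rewrite mulrzA -[n%:Z]natz mulrz_nat.
Qed.

Lemma lc_atom n s : lc (rcons (nseq n 0) 1) s = nth 0 s n.
Proof.
elim: n s => [|n IH] [|x s] /=; rewrite ?addr0 ?mulr1z ?add0r ?mulr0z ?mul0rz ?IH //.
by case: n {IH}.
Qed.

Lemma evx_lc s e : evx s e = lc (norm e) s.
Proof.
elim: e => [n|e1 IH1 e2 IH2|e1 IH|| e1 IH n] /=.
- by rewrite lc_atom.
- by rewrite lc_addl IH1 IH2.
- by rewrite lc_opp IH.
- by [].
- by rewrite lc_muln IH.
Qed.

Lemma lc0 c s : all (fun z => z == 0) c -> lc c s = 0.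
Proof.
elim: c s => [|x c IH] s //= /andP[/eqP -> H].
by rewrite mulr0z add0r IH.
Qed.

Lemma evx_sound s e1 e2 :
  all (fun z => z == 0) (addl (norm e1) (map (fun z => - z) (norm e2))) ->
  evx s e1 = evx s e2.
Proof.
move=> H; apply/eqP; rewrite -subr_eq0; apply/eqP.
by rewrite !evx_lc -lc_opp -lc_addl (@lc0 _ s H).
Qed.
End Refl.
Arguments evx {V}.

Ltac find_idx x s n :=
  lazymatch s with
  | x :: _ => constr:(n)
  | _ :: ?s' => find_idx x s' (S n)
  end.

Ltac reify s t :=
  lazymatch t with
  | @GRing.add _ ?a ?b => let ea := reify s a in let eb := reify s b in constr:(Ad ea eb)
  | @GRing.opp _ ?a => let ea := reify s a in constr:(Op ea)
  | @GRing.zero _ => constr:(Ze)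
  | @GRing.natmul _ ?a ?n => let ea := reify s a in constr:(Mn ea n)
  | _ => let n := find_idx t s 0%N in constr:(At n)
  end.

Ltac zsolve s :=
  lazymatch goal with
  | |- ?l = ?r =>
    let s := eval hnf in s in
    let el := reify s l in let er := reify s r in
    change (evx s el = evx s er); apply: evx_sound; vm_compute; reflexivity
  end.

Theorem mainTheorem12 (K : fieldType) (V : lmodType K) (mul : V -> V -> V)
    (hK : [pchar K] =i pred0) (hmul : bilinear_mul mul) :
  left_symmetric mul <->
  ((forall a b c : V,
      brk mul (brk mul a b) c + brk mul (brk mul b c) a + brk mul (brk mul c a) b = 0)
   /\
   (forall a b c : V,
      crl mul (crl mul a b) c =
        - crl mul (brk mul a b) c
        - (crl mul (brk mul a c) b) *+ 2
        + brk mul (crl mul a b) c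
        - brk mul (brk mul a c) b
        + crl mul a (crl mul b c)
        - crl mul a (brk mul b c)
        + brk mul a (crl mul b c))).
Proof.
case: hmul => mDl mDr mZl mZr.
have mNl a b : mul (- a) b = - mul a b.
  by rewrite -scaleN1r mZl scaleN1r.
have mNr a b : mul a (- b) = - mul a b.
  by rewrite -scaleN1r mZr scaleN1r.
pose D a b c := associator mul a b c - associator mul b a c.
have Dexp a b c : D a b c = mul (mul a b) c - mul a (mul b c) - (mul (mul b a) c - mul b (mul a c)) by [].
pose atoms a b c := [:: mul (mul a b) c; mul a (mul b c); mul (mul a c) b; mul a (mul c b);
  mul (mul b a) c; mul b (mul a c); mul (mul b c) a; mul b (mul c a);
  mul (mul c a) b; mul c (mul a b); mul (mul c b) a; mul c (mul b a)].
split.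
- move=> LS.
  have D0 a b c : D a b c = 0 by rewrite /D LS subrr.
  split=> a b c.
  + transitivity (D a b c - D a c b + D b c a); last by rewrite !D0 subrr addr0.
    rewrite !Dexp /brk !(mDl, mDr, mNl, mNr).
    zsolve (atoms a b c).
  + apply/eqP; rewrite -subr_eq0; apply/eqP.
    transitivity (D a b c + D a c b *+ 3 + D b c a); last by rewrite !D0 mul0rn !addr0.
    rewrite !Dexp /brk /crl !(mDl, mDr, mNl, mNr).
    zsolve (atoms a b c).
- case=> _ I2 a b c.
  pose E x y z := crl mul (crl mul x y) z - (
        - crl mul (brk mul x y) z
        - (crl mul (brk mul x z) y) *+ 2
        + brk mul (crl mul x y) z
        - brk mul (brk mul x z) y
        + crl mul x (crl mul y z)
        - crl mul x (brk mul y z)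
        + brk mul x (crl mul y z)).
  have E0 x y z : E x y z = 0 by rewrite /E I2 subrr.
  have H4 : D a b c *+ 4 = - E a b c + E a c b *+ 2 + E b a c.
    rewrite Dexp /E /brk /crl !(mDl, mDr, mNl, mNr).
    zsolve (atoms a b c).
  rewrite !E0 oppr0 mul0rn !addr0 in H4.
  apply/eqP; rewrite -subr_eq0; apply/eqP.
  have n4 : (4%:R : K) != 0 by move/pcharf0P: hK => ->.
  rewrite -[D a b c]/(associator mul a b c - associator mul b a c) in H4.
  by rewrite -(scale1r (_ - _)) -(mulVf n4) -scalerA scaler_nat H4 scaler0.
Qed.
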